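(* The polynomials $a_0,\Delta,\beta,\gamma_0$ satisfy $$\beta^2=a_0^q\gamma_0+\Delta\left(\Delta^{\frac{q-1}{2}}-a_0^{q-1}\right)^2.$$
   Context: Let $p>2$ be a prime, $q=p^n$, and $\mathbb{F}$ a field of characteristic $p$ containing $\mathbb{F}_q$. In $\mathbb{F}[a_0,a_1,a_2]$ define $\Delta=a_1^2-a_0a_2$, $\beta=\prod_{c\in\mathbb{F}_q}(a_1+ca_0)=a_1^q-a_0^{q-1}a_1$, and $\gamma_0=\prod_{c\in\mathbb{F}_q}(a_2+2ca_1+c^2a_0)$. *)

(* Defs.v *)
From HB Require Import structures.
From mathcomp Require Import all_boot all_order all_algebra all_field.
From mathcomp Require Import mpoly.
Set Implicit Arguments. Unset Strict Implicit. Unset Printing Implicit Defensive.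
Import GRing.Theory.
Local Open Scope ring_scope.

(* Polynomial ring F[a0,a1,a2] = {mpoly F[3]}.  F_q is given as a finite
   field K together with a ring embedding f : K -> F. *)
Definition a0 (F : fieldType) : {mpoly F[3]} := 'X_(0 : 'I_3).
Definition a1 (F : fieldType) : {mpoly F[3]} := 'X_(1 : 'I_3).
Definition a2 (F : fieldType) : {mpoly F[3]} := 'X_(2 : 'I_3).

Definition Delta (F : fieldType) : {mpoly F[3]} := a1 F ^+ 2 - a0 F * a2 F.

Definition beta (K : finFieldType) (F : fieldType) (f : {rmorphism K -> F})
  : {mpoly F[3]} := \prod_(c : K) (a1 F + f c *: a0 F).

Definition gamma0 (K : finFieldType) (F : fieldType) (f : {rmorphism K -> F})
  : {mpoly F[3]} :=
  \prod_(c : K) (a2 F + (2 * f c) *: a1 F + (f c ^+ 2) *: a0 F).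

(* Main.v *)
Require Import Defs.
From HB Require Import structures.
From mathcomp Require Import all_boot all_order all_algebra all_field.
From mathcomp Require Import mpoly.
From mathcomp Require Import ring.
Import GRing.Theory.
Local Open Scope ring_scope.

Lemma prodXc (K : finFieldType) (R : comNzRingType) (g : {rmorphism K -> R}) (y : R) :
  \prod_(c : K) (y + g c) = y ^+ #|K| - y.
Proof.
have H : \prod_(c : K) ('X + c%:P) = 'X^#|K| - 'X :> {poly K}.
  rewrite finField_genPoly (reindex_inj (@oppr_inj _)) /=.
  by apply: eq_bigr => c _; rewrite polyCN.
have := congr1 (fun P => (map_poly g P).[y]) H.
rewrite /= rmorph_prod horner_prod rmorphB /= map_polyXn map_polyX.
rewrite hornerD hornerN hornerXn hornerX => <-.
apply: eq_bigr => c _.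
by rewrite rmorphD /= map_polyX map_polyC /= hornerD hornerX hornerC.
Qed.

Lemma qnat (R : nzRingType) p n : p \in [pchar R] -> [pchar R].-nat (p ^ n)%N.
Proof.
move=> pR; rewrite (eq_pnat _ (pcharf_eq pR)).
by rewrite pnatX pnat_id ?orbT // (pcharf_prime pR).
Qed.

Lemma Key (K : finFieldType) (L : fieldType) (g : {rmorphism K -> L}) p n :
  p \in [pchar L] -> #|K| = (p ^ n)%N -> odd #|K| -> forall z d : L,
  \prod_(c : K) ((z + g c) ^+ 2 - d) =
   (z ^+ #|K| - z) ^+ 2 - d * (d ^+ (#|K|.-1./2) - 1) ^+ 2.
Proof.
move=> pL qE qodd z d.
have qm : #|K| = ((#|K|.-1./2).*2).+1.
  move: qodd; case: #|K| => [|k] //= ek.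
  by rewrite -[k in LHS](odd_double_half k) (negbTE ek).
set q := #|K|. set m := q.-1./2.
have qm' : q = m.*2.+1 := qm.
have pP : p \in [pchar {poly L}] by rewrite pchar_poly.
have qP : [pchar {poly L}].-nat q by rewrite /q qE; apply: qnat.
pose U := \prod_(c : K) ((z + g c)%:P ^+ 2 - 'X) : {poly L}.
pose V := ((z ^+ q - z) ^+ 2)%:P - 'X * ('X ^+ m - 1) ^+ 2 : {poly L}.
have UV : U \Po 'X^2 = V \Po 'X^2.
  rewrite /U rmorph_prod /=.
  transitivity (\prod_(c : K) (((z%:P - 'X) + (polyC \o g) c) * ((z%:P + 'X) + (polyC \o g) c))).
    apply: eq_bigr => c _ /=.
    rewrite comp_polyB comp_polyX rmorphXn /= comp_polyC polyCD; ring.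
  rewrite big_split !(@prodXc _ _ (polyC \o g)) -/q.
  rewrite !exprDn_pchar // exprNn_pchar //.
  rewrite /V comp_polyB comp_polyC comp_polyM comp_polyX !rmorphXn /= comp_polyB comp_polyC rmorphXn /= comp_polyX.
  rewrite [in 'X^q]qm' exprS -mul2n exprM.
  rewrite polyCB polyC1 rmorphXn /=. ring.
have E0 : (U - V) \Po 'X^2 == 0 by rewrite comp_polyB UV subrr.
move: E0; rewrite comp_poly_eq0 ?size_polyXn // subr_eq0 => /eqP UV'.
have := congr1 (fun P => P.[d]) UV'.
rewrite /U /V horner_prod !hornerE => <-.
by apply: eq_bigr => c _; rewrite !hornerE.
Qed.

Lemma MainL (K : finFieldType) (L : fieldType) (g : {rmorphism K -> L}) p n :
  p \in [pchar L] -> #|K| = (p ^ n)%N -> odd #|K| -> forall A0 A1 A2 : L, A0 != 0 ->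
  (\prod_(c : K) (A1 + g c * A0)) ^+ 2 =
  A0 ^+ #|K| * \prod_(c : K) (A2 + 2 * g c * A1 + g c ^+ 2 * A0)
  + (A1 ^+ 2 - A0 * A2) * ((A1 ^+ 2 - A0 * A2) ^+ (#|K|.-1./2) - A0 ^+ #|K|.-1) ^+ 2.
Proof.
move=> pL qE qodd A0 A1 A2 A0n.
have qm : #|K| = ((#|K|.-1./2).*2).+1.
  move: qodd; case: #|K| => [|k] //= ek.
  by rewrite -[k in LHS](odd_double_half k) (negbTE ek).
have KL := @Key K L g p n pL qE qodd.
set z := A1 / A0. set d := (A1 ^+ 2 - A0 * A2) / A0 ^+ 2.
have h1 c : A1 + g c * A0 = A0 * (z + g c) by rewrite /z; field.
have h2 c : A2 + 2 * g c * A1 + g c ^+ 2 * A0 = A0 * ((z + g c) ^+ 2 - d).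
  by rewrite /z /d; field.
have hD : A1 ^+ 2 - A0 * A2 = A0 ^+ 2 * d by rewrite /d; field.
rewrite (eq_bigr _ (fun c _ => h1 c)) (eq_bigr _ (fun c _ => h2 c)) !big_split /=.
rewrite !prodr_const prodXc KL hD.
set m := #|K|.-1./2.
have qm' : #|K| = m.*2.+1 := qm.
move: (z) (d) => z0 d0.
rewrite qm' /=.
move: (z0 ^+ m.*2.+1) => zq.
have e1 : A0 ^+ m.*2.+1 = A0 * (A0 ^+ 2) ^+ m by rewrite exprS -mul2n exprM.
have e2 : A0 ^+ m.*2 = (A0 ^+ 2) ^+ m by rewrite -mul2n exprM.
rewrite e1 e2 [(A0 ^+ 2 * d0) ^+ m]exprMn.
move: ((A0 ^+ 2) ^+ m) (d0 ^+ m) => s0 dm.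
ring.
Qed.

Theorem lemma2p2 (p n : nat) (K : finFieldType) (F : fieldType)
    (f : {rmorphism K -> F}) :
  prime p -> (2 < p)%N -> #|K| = (p ^ n)%N ->
  beta f ^+ 2 =
    a0 F ^+ (p ^ n) * gamma0 f
    + Delta F * (Delta F ^+ ((p ^ n).-1./2) - a0 F ^+ (p ^ n).-1) ^+ 2.
Proof.
move=> pp p2 qE.
have pK : p \in [pchar K] := card_finPcharP qE pp.
have qodd : odd #|K|.
  rewrite qE oddX; apply/orP; right; apply/negPn/negP => /(prime_oddPn pp) p2'.
  by rewrite p2' in p2.
pose g := ((@tofrac _) \o (@mpolyC 3 F) \o f)%FUN.
pose T : {rmorphism K -> {fraction {mpoly F[3]}}} := g.
have pL := rmorph_pchar T pK.
rewrite -qE.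
set A0 := tofrac (a0 F). set A1 := tofrac (a1 F). set A2 := tofrac (a2 F).
have A0n : A0 != 0.
  rewrite /A0 tofrac_eq0; apply/eqP => H.
  have := congr1 (meval (fun _ => (1 : F))) H.
  by rewrite /a0 mevalXU meval0 => /eqP; rewrite oner_eq0.
have H := @MainL K _ T p n pL qE qodd A0 A1 A2 A0n.
apply/eqP; rewrite -tofrac_eq; apply/eqP.
rewrite /beta /gamma0 /Delta.
transitivity ((\prod_(c : K) (A1 + T c * A0)) ^+ 2).
  rewrite rmorphXn rmorph_prod; congr (_ ^+ _); apply: eq_bigr => c _.
  by rewrite -mul_mpolyC rmorphD rmorphM.
rewrite H rmorphD !rmorphM !rmorphXn !rmorphB rmorph_prod !rmorphM.
congr (_ * _ + _).
apply: eq_bigr => c _.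
rewrite -!mul_mpolyC !rmorphD !rmorphM /= !rmorph_nat expr2 /=.
by [].
rewrite !rmorphXn !rmorphB !rmorphM.
by rewrite /A0 /A1 /A2 !expr2.
Qed.
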